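(* Let $\mathcal{B}$ be a unital complex algebra, $n_0\in\mathbb{N}$, $\mathcal{A}=\mathrm{Mat}_{n_0}(\mathcal{B})$ and let $(\Omega,\mathrm{d},\bar{\mathrm{d}})$ be a bidifferential graded algebra with $\Omega=\mathcal{A}\otimes\bigwedge(\mathbb{C}^2)$, where $\mathrm{d},\bar{\mathrm{d}}$ respect matrix sizes. Fix $n,n',m,m'\ge n_0$. Let $\mathbf{X}\in\mathrm{Mat}(n,n,\mathcal{B})$ and $\mathbf{Y}\in\mathrm{Mat}(n',n,\mathcal{B})$ satisfy $$\bar{\mathrm{d}}\mathbf{X}=(\mathrm{d}\mathbf{X})\,\mathbf{P},\qquad \bar{\mathrm{d}}\mathbf{Y}=(\mathrm{d}\mathbf{Y})\,\mathbf{P},\qquad \mathbf{R}\mathbf{X}-\mathbf{X}\mathbf{P}=-\mathbf{Q}\mathbf{Y},$$ where $\mathbf{P},\mathbf{R}\in\mathrm{Mat}(n,n,\mathcal{B})$ are $\mathrm{d}$- and $\bar{\mathrm{d}}$-constant and $\mathbf{Q}=\tilde{\mathbf{V}}\,Q\,\tilde{\mathbf{U}}$ with $\mathrm{d}$- and $\bar{\mathrm{d}}$-constant matrices $\tilde{\mathbf{U}}\in\mathrm{Mat}(m',n',\mathcal{B})$, $\tilde{\mathbf{V}}\in\mathrm{Mat}(n,m,\mathcal{B})$, $Q\in\mathrm{Mat}(m,m',\mathcal{B})$. If $\mathbf{X}$ is invertible, then $\phi:=\tilde{\mathbf{U}}\mathbf{Y}\mathbf{X}^{-1}\tilde{\mathbf{V}}\in\mathrm{Mat}(m',m,\mathcal{B})$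 satisfies $$\bar{\mathrm{d}}\phi=(\mathrm{d}\phi)\,Q\,\phi+\mathrm{d}\theta\qquad\text{with}\qquad \theta=\tilde{\mathbf{U}}\mathbf{Y}\mathbf{X}^{-1}\mathbf{R}\tilde{\mathbf{V}},$$ and consequently $\bar{\mathrm{d}}\mathrm{d}\phi=\mathrm{d}\phi\,Q\,\mathrm{d}\phi$.
   Context: A complex graded algebra is an associative algebra $\Omega=\bigoplus_{r\ge0}\Omega^r$ (direct sum of complex vector spaces) with $\Omega^r\Omega^s\subseteq\Omega^{r+s}$; $\Omega^0$ is a subalgebra and each $\Omega^r$ an $\Omega^0$-bimodule. A bidifferential graded algebra is a graded algebra with two linear maps $\mathrm{d},\bar{\mathrm{d}}:\Omega\to\Omega$ of degree one satisfying $\mathrm{d}^2=0$, $\bar{\mathrm{d}}^2=0$, $\mathrm{d}\bar{\mathrm{d}}+\bar{\mathrm{d}}\mathrm{d}=0$ and the graded Leibniz rule $\mathrm{d}(\chi\chi')=(\mathrm{d}\chi)\chi'+(-1)^r\chi\,\mathrm{d}\chi'$ (same for $\bar{\mathrm{d}}$) for $\chi\in\Omega^r$. $\mathrm{Mat}_{n_0}(\mathcal{B}):=\bigoplus_{n',n\ge n_0}\mathrm{Mat}(n',n,\mathcal{B})$ with the usual matrix product, extended by $AB=0$ whenever sizes do not match. $\Omega=\mathcal{A}\otimes\bigwedge(\mathbb{C}^2)$, elements of $\bigwedge(\mathbb{C}^2)$ are treated as constants; ''$\mathrm{d},\bar{\mathrm{d}}$ respect matrix sizes'' means they map $\mathrm{Mat}(n',n,\mathcal{B})\otimes\bigwedge(\mathbb{C}^2)$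 into itself. An element is $\mathrm{d}$- and $\bar{\mathrm{d}}$-constant if it is annihilated by both $\mathrm{d}$ and $\bar{\mathrm{d}}$. *)

(* Defs.v *)
From HB Require Import structures.
From mathcomp Require Import all_boot all_order all_algebra.
Set Implicit Arguments. Unset Strict Implicit. Unset Printing Implicit Defensive.
Import Order.TTheory GRing.Theory Num.Theory.
Local Open Scope ring_scope.

(* The block Mat(p,q,B) (x) /\(C^2) of Omega = Mat_{n0}(B) (x) /\(C^2):
   a form is given by its coefficients with respect to the basis
   e_S (S a subset of {0,1}) of the exterior algebra /\(C^2),
   e_{} = 1, e_{0} = xi_1, e_{1} = xi_2, e_{0,1} = xi_1 /\ xi_2. *)
Notation form B p q := {ffun {set 'I_2} -> 'M[B]_(p, q)}.

(* sign of e_T /\ e_U = (-1)^(wsign T U) e_(T :|: U) for disjoint T U *)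
Definition wsign (T U : {set 'I_2}) : nat :=
  #|[set ij : 'I_2 * 'I_2 | (ij.1 \in T) && (ij.2 \in U) && (ij.2 < ij.1)%N]|.

(* product in Omega of a block (p,q) element with a block (q,s) element
   (products of blocks of non-matching sizes are zero) *)
Definition wmul (B : nzRingType) p q s (a : form B p q) (b : form B q s)
  : form B p s :=
  [ffun S : {set 'I_2} => \sum_(T : {set 'I_2} | T \subset S)
                ((-1) ^+ wsign T (S :\: T)) *: (a T *m b (S :\: T))].

Definition form0 (B : nzRingType) p q (M : 'M[B]_(p, q)) : form B p q :=
  [ffun S : {set 'I_2} => if S == set0 then M else 0].

Definition wconst (B : nzRingType) p (S : {set 'I_2}) : form B p p :=
  [ffun T : {set 'I_2} => if T == S then 1%:M else 0].

Definition homog (B : nzRingType) p q (r : nat) (f : form B p q) : Prop :=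
  forall S : {set 'I_2}, #|S| <> r -> f S = 0.

(* a family of maps on the blocks, i.e. a map on Omega respecting matrix sizes *)
Definition blockmap (B : nzRingType) := forall p q : nat, form B p q -> form B p q.

Definition is_graded_derivation (K : fieldType) (B : algType K) (n0 : nat)
    (d : blockmap B) : Prop :=
  [/\ (forall p q, (n0 <= p)%N -> (n0 <= q)%N ->
         forall (k : K) (f g : form B p q),
           d p q (k%:A *: f + g) = k%:A *: d p q f + d p q g),
      (forall p q, (n0 <= p)%N -> (n0 <= q)%N ->
         forall r (f : form B p q), homog r f -> homog r.+1 (d p q f)),
      (forall p q s, (n0 <= p)%N -> (n0 <= q)%N -> (n0 <= s)%N ->
         forall r (f : form B p q) (g : form B q s), homog r f ->
           d p s (wmul f g)
           = wmul (d p q f) g + ((-1) ^+ r) *: wmul f (d q s g))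
    &
      (forall p S, (n0 <= p)%N -> d p p (wconst B p S) = 0)].

Definition is_bidga (K : fieldType) (B : algType K) (n0 : nat)
    (d dbar : blockmap B) : Prop :=
  [/\ is_graded_derivation n0 d, is_graded_derivation n0 dbar,
      (forall p q, (n0 <= p)%N -> (n0 <= q)%N -> forall f : form B p q,
         d p q (d p q f) = 0),
      (forall p q, (n0 <= p)%N -> (n0 <= q)%N -> forall f : form B p q,
         dbar p q (dbar p q f) = 0)
    & (forall p q, (n0 <= p)%N -> (n0 <= q)%N -> forall f : form B p q,
         d p q (dbar p q f) + dbar p q (d p q f) = 0)].

Definition dconst (B : nzRingType) (d dbar : blockmap B) p q (M : 'M[B]_(p, q))
  : Prop := d p q (form0 M) = 0 /\ dbar p q (form0 M) = 0.

(* Main.v *)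
Require Import Defs.
From HB Require Import structures.
From mathcomp Require Import all_boot all_order all_algebra.
Import Order.TTheory GRing.Theory Num.Theory.
Local Open Scope ring_scope.

Notation frm B p q := {ffun {set 'I_2} -> 'M[B]_(p, q)}.

Section Basic.
Variable B : nzRingType.

Lemma wsign_r0 T : wsign T set0 = 0%N.
Proof. apply/eqP; rewrite cards_eq0; apply/eqP/setP => ij; by rewrite !inE andbF. Qed.
Lemma wsign_l0 T : wsign set0 T = 0%N.
Proof. apply/eqP; rewrite cards_eq0; apply/eqP/setP => ij; by rewrite !inE. Qed.

Lemma wmul_form0r p q s (f : frm B p q) (M : 'M[B]_(q, s)) S :
  wmul f (form0 M) S = f S *m M.
Proof.
rewrite ffunE (bigD1 S) //= setDv ffunE eqxx wsign_r0 expr0 scale1r big1 ?addr0 //.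
move=> T /andP[sTS nTS]; rewrite ffunE ifN ?mulmx0 ?scaler0 //.
rewrite setD_eq0; apply: contra nTS => sST; apply/eqP; apply/eqP; by rewrite eqEsubset sTS sST.
Qed.

Lemma wmul_form0l p q s (M : 'M[B]_(p, q)) (g : frm B q s) S :
  wmul (form0 M) g S = M *m g S.
Proof.
rewrite ffunE (bigD1 set0) ?sub0set //= setD0 ffunE eqxx wsign_l0 expr0 scale1r big1 ?addr0 //.
by move=> T /andP[_ nT]; rewrite ffunE (negbTE nT) mul0mx scaler0.
Qed.

Lemma wmul0l p q s (g : frm B q s) : wmul (0 : frm B p q) g = 0.
Proof. by apply/ffunP => S; rewrite !ffunE big1 // => T _; rewrite ffunE mul0mx scaler0. Qed.
Lemma wmul0r p q s (f : frm B p q) : wmul f (0 : frm B q s) = 0.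
Proof. by apply/ffunP => S; rewrite !ffunE big1 // => T _; rewrite ffunE mulmx0 scaler0. Qed.

Lemma form0M p q s (A : 'M[B]_(p, q)) (C : 'M[B]_(q, s)) :
  form0 (A *m C) = wmul (form0 A) (form0 C).
Proof. by apply/ffunP => S; rewrite wmul_form0l !ffunE; case: ifP; rewrite ?mulmx0. Qed.

Lemma homog_form0 p q (M : 'M[B]_(p, q)) : homog 0 (form0 M).
Proof. move=> S HS; rewrite ffunE ifN //; apply/negP => /eqP E; apply: HS; by rewrite E cards0. Qed.
End Basic.
Arguments homog_form0 {B p q} M.

Section Deriv.
Variables (K : fieldType) (B : algType K) (n0 : nat) (d : blockmap B).
Hypothesis Hd : is_graded_derivation n0 d.

Lemma dD p q (f g : frm B p q) : (n0 <= p)%N -> (n0 <= q)%N ->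
  d p q (f + g) = d p q f + d p q g.
Proof.
move: Hd => [Hl _ _ _] hp hq.
by have := Hl _ _ hp hq 1 f g; rewrite !scale1r.
Qed.

Lemma d0 p q : (n0 <= p)%N -> (n0 <= q)%N -> d p q 0 = 0.
Proof. move=> hp hq; have := @dD p q 0%R 0%R hp hq; rewrite addr0.
by move/(congr1 (fun x => x - d p q 0)); rewrite subrr addrK. Qed.

Lemma d1 p : (n0 <= p)%N -> d p p (form0 (1%:M : 'M[B]_p)) = 0.
Proof.
move: Hd => [_ _ _ Hc] hp; rewrite -(Hc _ set0 hp); congr (d p p _).
Qed.

Lemma dprod p q s (A : 'M[B]_(p, q)) (C : 'M[B]_(q, s)) S :
  (n0 <= p)%N -> (n0 <= q)%N -> (n0 <= s)%N ->
  d p s (form0 (A *m C)) S = d p q (form0 A) S *m C + A *m d q s (form0 C) S.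
Proof.
move: Hd => [_ _ Hlb _] hp hq hs.
by rewrite form0M (Hlb _ _ _ hp hq hs 0 _ _ (homog_form0 A)) expr0 scale1r ffunE
  wmul_form0r wmul_form0l.
Qed.

Lemma dhom p q (M : 'M[B]_(p, q)) : (n0 <= p)%N -> (n0 <= q)%N ->
  homog 1 (d p q (form0 M)).
Proof. move: Hd => [_ Hh _ _] hp hq; exact: Hh _ _ hp hq 0 _ (homog_form0 M). Qed.
End Deriv.
Arguments dD {K B n0 d} Hd {p q} f g.
Arguments d0 {K B n0 d} Hd {p q}.
Arguments d1 {K B n0 d} Hd {p}.
Arguments dprod {K B n0 d} Hd {p q s} A C S.
Arguments dhom {K B n0 d} Hd {p q} M.

Lemma dinv {K : fieldType} {B : algType K} {n0} {d : blockmap B}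
  (Hd : is_graded_derivation n0 d) {n} {X Z : 'M[B]_n} S :
  (n0 <= n)%N -> Z *m X = 1%:M -> X *m Z = 1%:M ->
  d n n (form0 Z) S = - (Z *m d n n (form0 X) S *m Z).
Proof.
move=> hn HZX HXZ.
have H := dprod Hd Z X S hn hn hn.
rewrite HZX (d1 Hd hn) ffunE in H.
have H2 : d n n (form0 Z) S *m X = - (Z *m d n n (form0 X) S).
  by apply/eqP; rewrite -addr_eq0 -H.
by rewrite -[LHS]mulmx1 -HXZ mulmxA H2 mulNmx.
Qed.

Lemma dc0 {B : nzRingType} {d : blockmap B} {p q} {M : 'M[B]_(p,q)} S :
  d p q (form0 M) = 0 -> d p q (form0 M) S = 0.
Proof. by move=> ->; rewrite ffunE. Qed.

Lemma key (B : nzRingType) n n' m m' (U : 'M[B]_(m', n')) (Y : 'M[B]_(n', n))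
  (Z X P R a : 'M[B]_n) (V : 'M[B]_(n, m)) (Q : 'M[B]_(m, m')) (b : 'M[B]_(n', n)) :
  Z *m X = 1%:M -> X *m Z = 1%:M -> R *m X - X *m P = - (V *m Q *m U *m Y) ->
  (U *m (b *m P) *m Z + U *m Y *m - (Z *m (a *m P) *m Z)) *m V =
  (U *m b *m Z + U *m Y *m - (Z *m a *m Z)) *m V *m Q *m (U *m Y *m Z *m V) +
  (U *m b *m Z + U *m Y *m - (Z *m a *m Z)) *m R *m V.
Proof.
move=> HZX HXZ HR.
set E := (U *m b *m Z + U *m Y *m - (Z *m a *m Z)).
have EX : E *m X = U *m b - U *m Y *m Z *m a.
  rewrite /E mulmxDl !mulmxN !mulNmx -!mulmxA HZX !mulmx1.
  by [].
have W : V *m Q *m U *m Y = X *m P - R *m X by rewrite -opprB HR opprK.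
have -> : E *m V *m Q *m (U *m Y *m Z *m V) = E *m (V *m Q *m U *m Y) *m Z *m V.
  by rewrite !mulmxA.
rewrite W mulmxBr mulmxBl mulmxBl -[E *m (R *m X) *m Z]mulmxA -[R *m X *m Z]mulmxA HXZ mulmx1.
rewrite subrK !mulmxA EX.
rewrite !mulmxBl !mulmxDl !mulmxN !mulNmx -!mulmxA.
by [].
Qed.

Theorem theorem2p3 (K : numClosedFieldType) (B : algType K) (n0 : nat)
  (d dbar : blockmap B) (Hbidga : is_bidga n0 d dbar)
  (n n' m m' : nat) (Hn : (n0 <= n)%N) (Hn' : (n0 <= n')%N)
  (Hm : (n0 <= m)%N) (Hm' : (n0 <= m')%N)
  (X P R : 'M[B]_(n, n)) (Y : 'M[B]_(n', n))
  (Ut : 'M[B]_(m', n')) (Vt : 'M[B]_(n, m)) (Q : 'M[B]_(m, m'))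
  (HP : dconst d dbar P) (HR : dconst d dbar R)
  (HUt : dconst d dbar Ut) (HVt : dconst d dbar Vt) (HQ : dconst d dbar Q)
  (HX : dbar n n (form0 X) = wmul (d n n (form0 X)) (form0 P))
  (HY : dbar n' n (form0 Y) = wmul (d n' n (form0 Y)) (form0 P))
  (HRXP : R *m X - X *m P = - ((Vt *m Q *m Ut) *m Y))
  (Xinv : 'M[B]_(n, n)) (HXl : Xinv *m X = 1%:M) (HXr : X *m Xinv = 1%:M) :
  let phi := Ut *m Y *m Xinv *m Vt in
  let theta := Ut *m Y *m Xinv *m R *m Vt in
  dbar m' m (form0 phi)
    = wmul (wmul (d m' m (form0 phi)) (form0 Q)) (form0 phi)
      + d m' m (form0 theta)
  /\ dbar m' m (d m' m (form0 phi))
    = wmul (wmul (d m' m (form0 phi)) (form0 Q)) (d m' m (form0 phi)).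
Proof.
move=> phi theta.
case: Hbidga => Hd Hdb Hdd Hdbdb Hcomm.
have E1 : dbar m' m (form0 phi)
    = wmul (wmul (d m' m (form0 phi)) (form0 Q)) (form0 phi)
      + d m' m (form0 theta).
  apply/ffunP => S.
  rewrite ffunE !wmul_form0r /phi /theta.
  rewrite !(dprod Hd) // !(dprod Hdb) // !(dinv Hd _ Hn HXl HXr) !(dinv Hdb _ Hn HXl HXr).
  rewrite HX HY !wmul_form0r.
  rewrite ?(dc0 S (proj1 HUt)) ?(dc0 S (proj2 HUt)) ?(dc0 S (proj1 HVt)) ?(dc0 S (proj2 HVt)) ?(dc0 S (proj1 HR)).
  rewrite !mul0mx !mulmx0 !add0r !addr0.
  set a := d n n (form0 X) S; set b := d n' n (form0 Y) S.
  exact: (@key _ _ _ _ _ Ut Y Xinv X P R a Vt Q b HXl HXr HRXP).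
split=> //.
have Hdphi := dhom Hd phi Hm' Hm.
set F := wmul (d m' m (form0 phi)) (form0 Q).
have HF : homog 1 F.
  by move=> S HS; rewrite wmul_form0r (Hdphi S HS) mul0mx.
have dF : d m' m' F = 0.
  move: Hd => [_ _ Hlb _].
  by rewrite (Hlb _ _ _ Hm' Hm Hm' 1 _ _ Hdphi) Hdd // (proj1 HQ) wmul0l wmul0r scaler0 addr0.
have E2 : d m' m (dbar m' m (form0 phi)) = - wmul F (d m' m (form0 phi)).
  move: (Hd) => [_ _ Hlb _].
  rewrite E1 (dD Hd) // Hdd // addr0 (Hlb _ _ _ Hm' Hm' Hm 1 _ _ HF) dF wmul0l add0r.
  by rewrite expr1 scaleN1r.
rewrite -[wmul F _]opprK -E2.
by apply/eqP; rewrite -addr_eq0 addrC Hcomm.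
Qed.
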